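(* For any integers $k,\ell\ge2$ there is a bijective map $\lambda\mapsto(\vec\rho_\lambda,c_\lambda)$ from $(0,\infty)$ to the set of non-trivial solutions of the relaxed system described in the context. Moreover, each component of this map is an explicit real analytic function of $\lambda$.
   Context: Write $[x]_0=\max(0,x)$ and $[x]_a^b=\max(a,\min(b,x))$. For $c>0$ consider random variables $I_{A_C\to B},I_{B\to A_C}$ with values in $\{0,\dots,\ell-1\}$ and $I_{A_R\to B},I_{B\to A_R}$ with values in $\{0,1\}$; let superscripts $(j)$ denote independent copies and $X\sim\mathrm{Po}(kc)$ be independent of all of them. The system consists of the distributional equations (1) $I_{A_C\to B}\overset{d}{=}\ell-1-I_{B\to A_C}$; (2) $I_{A_R\to B}\overset{d}{=}[1-\sum_{j=1}^{k-1}I_{B\to A_R}^{(j)}]_0$; (3) $I_{B\to A_C}\overset{d}{=}[\ell-I_{A_C\to B}-\sum_{j=1}^{X}I_{A_R\to B}^{(j)}]_0^{\ell-1}$; (4) $I_{B\to A_R}\overset{d}{=}[\ell-I_{A_C\to B}^{(1)}-I_{A_C\to B}^{(2)}-\sum_{j=1}^{X}I_{A_R\to B}^{(j)}]_0^{1}$. The four distributions are encoded as a vector $\vec\rho$ of point probabilities. A solution of the relaxed system is a pair $(\vec\rho,c)$ with $c\in(0,\infty)$ such that the distributions described by $\vec\rho$ satisfy (1)–(4) with this $c$. A solution is trivial if $\Pr[I_{A_C\to B}=0]=\Pr[I_{A_R\to B}=0]=\Pr[I_{B\to A_C}=\ell-1]=\Pr[I_{B\to A_R}=1]=1$. *)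

(* Defs.v *)
From Stdlib Require Import Reals ZArith.
From Coquelicot Require Import Coquelicot.
Open Scope R_scope.

Fixpoint sumR (n : nat) (f : nat -> R) : R :=
  match n with
  | O => 0
  | S m => sumR m f + f m
  end.

Definition indZ (x y : Z) : R := if Z.eq_dec x y then 1 else 0.

(* [x]_a^b = max(a, min(b, x)) on integers *)
Definition clampZ (a b x : Z) : Z := Z.max a (Z.min b x).

Definition is_pmf (n : nat) (p : nat -> R) : Prop :=
  (forall i, 0 <= p i) /\ (forall i, (n <= i)%nat -> p i = 0) /\ sumR n p = 1.

(* law of the sum of m independent copies of a nat-valued variable with law p *)
Fixpoint conv_pow (p : nat -> R) (m : nat) : nat -> R :=
  match m with
  | O => fun s => match s with O => 1 | _ => 0 end
  | S m' => fun s => sumR (S s) (fun a => conv_pow p m' a * p (s - a)%nat)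
  end.

Definition poisson (mu : R) (n : nat) : R := exp (- mu) * mu ^ n / INR (fact n).

(* law of sum_{j=1}^X Y^(j), X ~ Po(mu) independent of the iid Y^(j) ~ p *)
Definition compound_poisson (mu : R) (p : nat -> R) (s : nat) : R :=
  Series (fun n => poisson mu n * conv_pow p n s).

(* The vector rho: point probabilities of the four distributions. *)
Record Dist4 := mkDist4 {
  pACB : nat -> R;  (* law of I_{A_C -> B}, values in {0..l-1} *)
  pBAC : nat -> R;  (* law of I_{B -> A_C}, values in {0..l-1} *)
  pARB : nat -> R;  (* law of I_{A_R -> B}, values in {0,1} *)
  pBAR : nat -> R   (* law of I_{B -> A_R}, values in {0,1} *)
}.

Definition relaxed_solution (k l : nat) (rho : Dist4) (c : R) : Prop :=
  0 < c /\
  is_pmf l (pACB rho) /\ is_pmf l (pBAC rho) /\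
  is_pmf 2 (pARB rho) /\ is_pmf 2 (pBAR rho) /\
  let S := compound_poisson (INR k * c) (pARB rho) in
  (* (1) I_{A_C->B} =d l-1-I_{B->A_C} *)
  (forall v : nat, pACB rho v =
     sumR l (fun b => pBAC rho b *
       indZ (Z.of_nat l - 1 - Z.of_nat b) (Z.of_nat v))) /\
  (* (2) I_{A_R->B} =d [1 - sum_{j=1}^{k-1} I_{B->A_R}^(j)]_0 *)
  (forall v : nat, pARB rho v =
     sumR k (fun t => conv_pow (pBAR rho) (k - 1) t *
       indZ (Z.max 0 (1 - Z.of_nat t)) (Z.of_nat v))) /\
  (* (3) I_{B->A_C} =d [l - I_{A_C->B} - sum_{j=1}^X I_{A_R->B}^(j)]_0^{l-1} *)
  (forall v : nat, pBAC rho v =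
     sumR l (fun a => pACB rho a *
       Series (fun s => S s *
         indZ (clampZ 0 (Z.of_nat l - 1) (Z.of_nat l - Z.of_nat a - Z.of_nat s))
              (Z.of_nat v)))) /\
  (* (4) I_{B->A_R} =d [l - I^(1)_{A_C->B} - I^(2)_{A_C->B} - sum_{j=1}^X I_{A_R->B}^(j)]_0^1 *)
  (forall v : nat, pBAR rho v =
     sumR l (fun a1 => sumR l (fun a2 => pACB rho a1 * pACB rho a2 *
       Series (fun s => S s *
         indZ (clampZ 0 1 (Z.of_nat l - Z.of_nat a1 - Z.of_nat a2 - Z.of_nat s))
              (Z.of_nat v))))).

Definition trivial_solution (l : nat) (rho : Dist4) : Prop :=
  pACB rho 0 = 1 /\ pARB rho 0 = 1 /\ pBAC rho (l - 1)%nat = 1 /\ pBAR rho 1 = 1.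

Definition analytic_on_pos (f : R -> R) : Prop :=
  forall x0, 0 < x0 -> exists (a : nat -> R) (r : R), 0 < r /\
    forall x, Rabs (x - x0) < r -> is_pseries a (x - x0) (f x).

(* Main.v *)
Require Import Defs.
From Stdlib Require Import Reals ZArith Lra Lia FunctionalExtensionality.
From Coquelicot Require Import Coquelicot.
Open Scope R_scope.

Lemma scal_pow (a : nat -> R) (y : R) n : scal (pow_n y n) (a n) = a n * y ^ n.
Proof. rewrite pow_n_pow. unfold scal; simpl. unfold mult; simpl. ring. Qed.

Lemma is_pseries_R (a : nat -> R) (y l : R) :
  is_pseries a y l <-> is_series (fun n => a n * y ^ n) l.
Proof.
  unfold is_pseries; split; intro H; (eapply is_series_ext; [|exact H]); intro n;
  cbv beta; rewrite scal_pow; reflexivity.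
Qed.

Lemma sum_f_R0_ext_tail (a : nat -> R) (N n : nat) :
  (forall m, (m > N)%nat -> a m = 0) -> (n >= N)%nat ->
  sum_f_R0 a n = sum_f_R0 a N.
Proof.
  intros H Hn. induction Hn as [|n Hn IH]; [reflexivity|].
  simpl. rewrite IH, H by lia. ring.
Qed.

Lemma fin_series (a : nat -> R) (N : nat) :
  (forall m, (m > N)%nat -> a m = 0) -> is_series a (sum_f_R0 a N).
Proof.
  intros H. apply is_series_Reals. intros eps Heps. exists N. intros n Hn.
  rewrite (sum_f_R0_ext_tail a N n H Hn). unfold R_dist.
  rewrite Rminus_eq_0, Rabs_R0. exact Heps.
Qed.

Lemma fin_series' (a : nat -> R) (N : nat) l :
  (forall m, (m > N)%nat -> a m = 0) -> l = sum_f_R0 a N -> is_series a l.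
Proof. intros H ->. apply fin_series, H. Qed.

Definition AnAt (f : R -> R) (x0 : R) : Prop :=
  exists (a : nat -> R) (M K : R), 0 < K /\ (forall n, Rabs (a n) <= M * K ^ n) /\
    forall x, Rabs (x - x0) * K < 1 -> is_pseries a (x - x0) (f x).

Lemma AnAt_analytic (f : R -> R) :
  (forall x0, 0 < x0 -> AnAt f x0) -> analytic_on_pos f.
Proof.
  intros H x0 Hx0. destruct (H x0 Hx0) as (a & M & K & HK & _ & Hs).
  exists a, (/ K). split; [apply Rinv_0_lt_compat; exact HK|].
  intros x Hx. apply Hs.
  apply (Rmult_lt_compat_r K) in Hx; [|exact HK].
  rewrite Rinv_l in Hx by lra. exact Hx.
Qed.

Lemma AnAt_ext (f g : R -> R) (x0 : R) :
  (forall x, f x = g x) -> AnAt f x0 -> AnAt g x0.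
Proof.
  intros E (a & M & K & HK & Hb & Hs). exists a, M, K. split; [exact HK|].
  split; [exact Hb|]. intros x Hx. rewrite <- E. apply Hs, Hx.
Qed.

Lemma M_nonneg (a : nat -> R) (M K : R) :
  (forall n, Rabs (a n) <= M * K ^ n) -> 0 <= M.
Proof.
  intros H. specialize (H O). simpl in H. pose proof (Rabs_pos (a O)). lra.
Qed.

Lemma abs_conv (a : nat -> R) (M K y : R) :
  0 < K -> (forall n, Rabs (a n) <= M * K ^ n) -> Rabs y * K < 1 ->
  ex_series (fun n => Rabs (a n * y ^ n)).
Proof.
  intros HK Hb Hy. pose proof (M_nonneg _ _ _ Hb) as HM.
  apply (@ex_series_le R_AbsRing R_CompleteNormedModule _ (fun n => M * (K * Rabs y) ^ n)).
  - intro n. change norm with Rabs. rewrite Rabs_Rabsolu, Rabs_mult, <- RPow_abs.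
    rewrite Rpow_mult_distr, <- Rmult_assoc.
    apply Rmult_le_compat_r; [apply pow_le, Rabs_pos| apply Hb].
  - apply (ex_series_ext (fun n => scal M ((K * Rabs y) ^ n))).
    { intro n. reflexivity. }
    apply (@ex_series_scal R_AbsRing R_NormedModule). apply ex_series_geom.
    rewrite Rabs_pos_eq by (apply Rmult_le_pos; [lra|apply Rabs_pos]). lra.
Qed.

Lemma AnAt_const (c x0 : R) : AnAt (fun _ => c) x0.
Proof.
  exists (fun n => match n with O => c | _ => 0 end), (Rabs c), 1.
  split; [lra|]. split.
  - intros [|n]; simpl; [lra|]. rewrite Rabs_R0, pow1. pose proof (Rabs_pos c). lra.
  - intros x _. apply is_pseries_R.
    apply (fin_series' _ 0); [intros [|m] Hm; [lia|ring]|simpl; ring].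
Qed.

Lemma AnAt_id (x0 : R) : AnAt (fun x => x) x0.
Proof.
  exists (fun n => match n with O => x0 | 1%nat => 1 | _ => 0 end), (Rabs x0 + 1), 1.
  split; [lra|]. split.
  - pose proof (Rabs_pos x0).
    intros [|[|n]]; simpl; rewrite ?Rabs_R0, ?Rabs_R1, ?pow1; lra.
  - intros x _. apply is_pseries_R.
    apply (fin_series' _ 1); [intros [|[|m]] Hm; [lia|lia|ring]|simpl; ring].
Qed.

Lemma AnAt_exp (c x0 : R) : AnAt (fun x => exp (c * x)) x0.
Proof.
  exists (fun n => exp (c * x0) * (c ^ n / INR (fact n))), (exp (c * x0)), (Rabs c + 1).
  pose proof (Rabs_pos c). split; [lra|]. split.
  - intro n. rewrite Rabs_mult, (Rabs_pos_eq (exp _)) by (left; apply exp_pos).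
    apply Rmult_le_compat_l; [left; apply exp_pos|].
    unfold Rdiv. rewrite Rabs_mult, <- RPow_abs.
    rewrite (Rabs_pos_eq (/ INR (fact n))) by (left; apply Rinv_0_lt_compat, INR_fact_lt_0).
    assert (Hf : / INR (fact n) <= 1).
    { pose proof (INR_fact_lt_0 n).
      assert (1 <= INR (fact n)).
      { replace 1 with (INR 1) by reflexivity. apply le_INR.
        pose proof (lt_O_fact n). lia. }
      rewrite <- Rinv_1. apply Rinv_le_contravar; lra. }
    apply Rle_trans with (Rabs c ^ n * 1).
    + apply Rmult_le_compat_l; [apply pow_le; lra| exact Hf].
    + rewrite Rmult_1_r. apply pow_incr. lra.
  - intros x _. apply is_pseries_R.
    pose proof (is_exp_Reals (c * (x - x0))) as He. apply is_pseries_R in He.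
    replace (exp (c * x)) with (exp (c * x0) * exp (c * (x - x0)))
      by (rewrite <- exp_plus; f_equal; ring).
    apply (is_series_scal (exp (c * x0))) in He.
    eapply is_series_ext; [|exact He]. intro n. simpl. unfold scal; simpl; unfold mult; simpl.
    rewrite Rpow_mult_distr. unfold Rdiv. ring.
Qed.

Lemma yK_le (y K K' : R) : 0 < K -> K <= K' -> Rabs y * K' < 1 -> Rabs y * K < 1.
Proof.
  intros HK HK' H. pose proof (Rabs_pos y).
  assert (Rabs y * K <= Rabs y * K') by (apply Rmult_le_compat_l; lra). lra.
Qed.

Lemma pow_mono_K (K K' : R) n : 0 < K -> K <= K' -> K ^ n <= K' ^ n.
Proof. intros. apply pow_incr. lra. Qed.

Lemma AnAt_plus (f g : R -> R) (x0 : R) :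
  AnAt f x0 -> AnAt g x0 -> AnAt (fun x => f x + g x) x0.
Proof.
  intros (a & M & K & HK & Hb & Hs) (b & M' & K' & HK' & Hb' & Hs').
  pose proof (M_nonneg _ _ _ Hb). pose proof (M_nonneg _ _ _ Hb').
  exists (fun n => a n + b n), (M + M'), (Rmax K K').
  assert (H1 : K <= Rmax K K') by apply Rmax_l.
  assert (H2 : K' <= Rmax K K') by apply Rmax_r.
  split; [lra|]. split.
  - intro n. eapply Rle_trans; [apply Rabs_triang|].
    pose proof (pow_mono_K K (Rmax K K') n HK H1).
    pose proof (pow_mono_K K' (Rmax K K') n HK' H2).
    specialize (Hb n). specialize (Hb' n).
    assert (M * K ^ n <= M * Rmax K K' ^ n) by (apply Rmult_le_compat_l; lra).
    assert (M' * K' ^ n <= M' * Rmax K K' ^ n) by (apply Rmult_le_compat_l; lra).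
    lra.
  - intros x Hx. apply is_pseries_R.
    pose proof (Hs x (yK_le _ _ _ HK H1 Hx)) as A1.
    pose proof (Hs' x (yK_le _ _ _ HK' H2 Hx)) as A2.
    apply is_pseries_R in A1. apply is_pseries_R in A2.
    pose proof (is_series_plus _ _ _ _ A1 A2) as A3.
    eapply is_series_ext; [|exact A3]. intro n. cbv beta.
    unfold plus; simpl. ring.
Qed.

Lemma sum_const_bound (f : nat -> R) (c : R) n :
  (forall i, (i <= n)%nat -> Rabs (f i) <= c) -> Rabs (sum_f_R0 f n) <= INR (S n) * c.
Proof.
  intro H. eapply Rle_trans; [apply sum_f_R0_triangle|].
  induction n as [|n IH].
  - simpl. specialize (H O (le_n _)). lra.
  - simpl sum_f_R0. rewrite S_INR.
    assert (sum_f_R0 (fun i : nat => Rabs (f i)) n <= INR (S n) * c)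
      by (apply IH; intros; apply H; lia).
    specialize (H (S n) (le_n _)). lra.
Qed.

Lemma INR_S_le_pow2 n : INR (S n) <= 2 ^ n.
Proof.
  induction n as [|n IH]; simpl; [lra|]. rewrite S_INR in *. simpl in IH.
  assert (1 <= 2 ^ n) by (apply pow_R1_Rle; lra). destruct n; simpl in *; lra.
Qed.

Lemma AnAt_mult (f g : R -> R) (x0 : R) :
  AnAt f x0 -> AnAt g x0 -> AnAt (fun x => f x * g x) x0.
Proof.
  intros (a & M & K & HK & Hb & Hs) (b & M' & K' & HK' & Hb' & Hs').
  pose proof (M_nonneg _ _ _ Hb). pose proof (M_nonneg _ _ _ Hb').
  set (L := Rmax K K').
  assert (H1 : K <= L) by apply Rmax_l.
  assert (H2 : K' <= L) by apply Rmax_r.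
  exists (PS_mult a b), (M * M'), (2 * L).
  split; [lra|]. split.
  - intro n. unfold PS_mult.
    eapply Rle_trans; [apply (sum_const_bound _ (M * M' * L ^ n))|].
    + intros i Hi. rewrite Rabs_mult.
      replace (M * M' * L ^ n) with ((M * L ^ i) * (M' * L ^ (n - i)))
        by (assert (E : L ^ n = L ^ i * L ^ (n - i))
              by (rewrite <- pow_add; f_equal; lia); rewrite E; ring).
      apply Rmult_le_compat; try apply Rabs_pos.
      * eapply Rle_trans; [apply Hb|]. apply Rmult_le_compat_l; [lra|]. apply pow_mono_K; lra.
      * eapply Rle_trans; [apply Hb'|]. apply Rmult_le_compat_l; [lra|]. apply pow_mono_K; lra.
    + rewrite Rpow_mult_distr.
      assert (0 <= M * M' * L ^ n) by (apply Rmult_le_pos; [apply Rmult_le_pos|apply pow_le]; lra).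
      pose proof (INR_S_le_pow2 n).
      replace (M * M' * (2 ^ n * L ^ n)) with (2 ^ n * (M * M' * L ^ n)) by ring.
      apply Rmult_le_compat_r; lra.
  - intros x Hx.
    assert (HxL : Rabs (x - x0) * L < 1).
    { apply (yK_le _ L (2 * L)); lra. }
    pose proof (Hs x (yK_le _ _ _ HK H1 HxL)) as A1.
    pose proof (Hs' x (yK_le _ _ _ HK' H2 HxL)) as A2.
    apply is_pseries_R in A1. apply is_pseries_R in A2. apply is_pseries_R.
    pose proof (is_series_mult _ _ _ _ A1 A2
      (abs_conv _ _ _ _ HK Hb (yK_le _ _ _ HK H1 HxL))
      (abs_conv _ _ _ _ HK' Hb' (yK_le _ _ _ HK' H2 HxL))) as A3.
    eapply is_series_ext; [|exact A3]. intro n. cbv beta. unfold PS_mult.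
    rewrite Rmult_comm, scal_sum. apply sum_eq. intros i Hi.
    replace ((x - x0) ^ n) with ((x - x0) ^ i * (x - x0) ^ (n - i))
      by (rewrite <- pow_add; f_equal; lia).
    ring.
Qed.

Fixpoint tab (x0 : R) (step : nat -> (nat -> R) -> R) (n : nat) : nat -> R :=
  match n with
  | O => fun _ => x0
  | S m => fun j => if (j <=? m)%nat then tab x0 step m j else step m (tab x0 step m)
  end.
Definition srec x0 step (j : nat) : R := tab x0 step j j.

Lemma tab_spec x0 step : forall n j, (j <= n)%nat -> tab x0 step n j = srec x0 step j.
Proof.
  induction n as [|m IH]; intros j Hj.
  - assert (j = O) by lia. subst. reflexivity.
  - simpl. destruct (Nat.leb_spec j m).
    + apply IH. lia.
    + assert (j = S m) by lia. subst. unfold srec. cbn [tab].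
      destruct (Nat.leb_spec (S m) m); [lia|]. reflexivity.
Qed.

Lemma srec_0 x0 step : srec x0 step O = x0.
Proof. reflexivity. Qed.

Lemma srec_S x0 step m :
  (forall f g, (forall i, (i <= m)%nat -> f i = g i) -> step m f = step m g) ->
  srec x0 step (S m) = step m (srec x0 step).
Proof.
  intros Hs. unfold srec at 1. cbn [tab].
  destruct (Nat.leb_spec (S m) m); [lia|].
  apply Hs. intros i Hi. apply tab_spec. exact Hi.
Qed.

Lemma geom_half (t : R) n : 0 <= t <= 1/2 -> sum_f_R0 (fun i => t ^ (S i)) n <= 2 * t.
Proof.
  intros Ht.
  assert (E : sum_f_R0 (fun i => t ^ (S i)) n * (1 - t) = t - t ^ (S (S n))).
  { induction n as [|n IH]; simpl in *; [ring|]. rewrite Rmult_plus_distr_r, IH. simpl. ring. }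
  assert (0 <= t ^ (S (S n))) by (apply pow_le; lra).
  assert (0 <= sum_f_R0 (fun i => t ^ (S i)) n).
  { apply cond_pos_sum. intro i. apply pow_le. lra. }
  nra.
Qed.

Definition bstep (a : nat -> R) (m : nat) (f : nat -> R) : R :=
  - / a O * sum_f_R0 (fun i => a (S i) * f (m - i)%nat) m.
Definition binv (a : nat -> R) := srec (/ a O) (bstep a).

Lemma binv_S (a : nat -> R) m : binv a (S m) = - / a O * sum_f_R0 (fun i => a (S i) * binv a (m - i)%nat) m.
Proof.
  unfold binv. rewrite srec_S; [reflexivity|].
  intros f g H. unfold bstep. f_equal. apply sum_eq. intros i Hi. rewrite H by lia. reflexivity.
Qed.

Lemma PS_mult_binv (a : nat -> R) (Ha : a O <> 0) n :
  PS_mult a (binv a) n = match n with O => 1 | _ => 0 end.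
Proof.
  destruct n as [|m].
  - unfold PS_mult. simpl. unfold binv, srec. simpl. field. exact Ha.
  - unfold PS_mult. rewrite decomp_sum by lia. simpl pred.
    rewrite Nat.sub_0_r, binv_S.
    replace (sum_f_R0 (fun i => a (S i) * binv a (S m - S i)) m)
      with (sum_f_R0 (fun i => a (S i) * binv a (m - i)) m)
      by (apply sum_eq; intros; reflexivity).
    field. exact Ha.
Qed.

Lemma binv_bound (a : nat -> R) (M K : R) (Ha : a O <> 0) (HK : 0 < K)
  (Hb : forall n, Rabs (a n) <= M * K ^ n) :
  forall n, Rabs (binv a n) <= / Rabs (a O) * (2 * (M / Rabs (a O)) * K) ^ n.
Proof.
  pose proof (Rabs_pos_lt _ Ha) as Ha0.
  assert (HM : Rabs (a O) <= M) by (specialize (Hb O); simpl in Hb; lra).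
  set (A0 := Rabs (a O)) in *.
  set (L := 2 * (M / A0) * K).
  set (t := A0 / (2 * M)).
  assert (HMp : 0 < M) by lra.
  assert (HKL : K = L * t) by (unfold L, t; field; lra).
  assert (Ht : 0 <= t <= 1/2).
  { unfold t. split. { apply Rmult_le_pos; [lra|]. left; apply Rinv_0_lt_compat; lra. }
    apply (Rmult_le_reg_r (2 * M)); [lra|]. unfold Rdiv. rewrite Rmult_assoc, Rinv_l by lra. lra. }
  assert (HL : 0 < L).
  { unfold L. apply Rmult_lt_0_compat; [|lra]. apply Rmult_lt_0_compat; [lra|].
    apply Rmult_lt_0_compat; [lra|]. apply Rinv_0_lt_compat; lra. }
  assert (Hstrong : forall n j, (j <= n)%nat -> Rabs (binv a j) <= / A0 * L ^ j).
  { induction n as [|n IH]; intros j Hj.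
    - assert (j = O) by lia. subst j. unfold binv, srec. simpl. unfold A0.
      rewrite Rabs_inv. lra.
    - destruct (Nat.leb_spec j n); [apply IH; lia|].
      assert (j = S n) by lia. subst j. rewrite binv_S.
      rewrite Rabs_mult, Rabs_Ropp, Rabs_inv. fold A0.
      assert (Hsum : Rabs (sum_f_R0 (fun i => a (S i) * binv a (n - i)) n)
                     <= (M * / A0 * L ^ (S n)) * sum_f_R0 (fun i => t ^ (S i)) n).
      { eapply Rle_trans; [apply sum_f_R0_triangle|].
        rewrite scal_sum. apply sum_Rle. intros i Hi.
        rewrite Rabs_mult.
        assert (E : t ^ S i * (M * / A0 * L ^ S n) = (M * K ^ (S i)) * (/ A0 * L ^ (n - i))).
        { rewrite HKL, Rpow_mult_distr.
          assert (E2 : L ^ S n = L ^ S i * L ^ (n - i)) by (rewrite <- pow_add; f_equal; lia).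
          rewrite E2. ring. }
        rewrite E. apply Rmult_le_compat; try apply Rabs_pos. apply Hb. apply IH. lia. }
      pose proof (geom_half t n Ht).
      assert (0 <= M * / A0 * L ^ S n).
      { apply Rmult_le_pos; [apply Rmult_le_pos; [lra|left; apply Rinv_0_lt_compat; lra]|apply pow_le; lra]. }
      assert (Hs2 : Rabs (sum_f_R0 (fun i => a (S i) * binv a (n - i)) n) <= L ^ S n).
      { eapply Rle_trans; [exact Hsum|].
        apply Rle_trans with ((M * / A0 * L ^ S n) * (2 * t)); [apply Rmult_le_compat_l; assumption|].
        right. unfold t. field. split; lra. }
      apply Rmult_le_compat_l; [left; apply Rinv_0_lt_compat; lra|exact Hs2]. }
  intro n. apply (Hstrong n n). lia.
Qed.


Lemma AnAt_val (f : R -> R) (x0 : R) (a : nat -> R) (K : R) :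
  0 < K -> (forall x, Rabs (x - x0) * K < 1 -> is_pseries a (x - x0) (f x)) -> f x0 = a O.
Proof.
  intros HK Hs. assert (H := Hs x0). rewrite Rminus_eq_0, Rabs_R0, Rmult_0_l in H.
  specialize (H Rlt_0_1). apply is_pseries_R in H.
  assert (H2 : is_series (fun n => a n * 0 ^ n) (a O)).
  { apply (fin_series' _ 0); [intros [|m] Hm; [lia|simpl; ring]|simpl; ring]. }
  apply is_series_unique in H. apply is_series_unique in H2. congruence.
Qed.

Lemma AnAt_inv (g : R -> R) (x0 : R) : AnAt g x0 -> g x0 <> 0 -> AnAt (fun x => / g x) x0.
Proof.
  intros (a & M & K & HK & Hb & Hs) Hg.
  rewrite (AnAt_val g x0 a K HK Hs) in Hg.
  pose proof (Rabs_pos_lt _ Hg) as Ha0.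
  assert (HM : Rabs (a O) <= M) by (specialize (Hb O); simpl in Hb; lra).
  set (L := 2 * (M / Rabs (a O)) * K).
  assert (HKL : K <= L).
  { unfold L. assert (1 <= M / Rabs (a O)).
    { apply (Rmult_le_reg_r (Rabs (a O))); [lra|]. unfold Rdiv.
      rewrite Rmult_assoc, Rinv_l by lra. lra. }
    nra. }
  exists (binv a), (/ Rabs (a O)), L. split; [lra|]. split.
  - apply binv_bound; assumption.
  - intros x Hx. apply is_pseries_R.
    assert (HxK : Rabs (x - x0) * K < 1) by (apply (yK_le _ K L); lra).
    pose proof (Hs x HxK) as A1. apply is_pseries_R in A1.
    assert (Hbb := binv_bound a M K Hg HK Hb).
    pose proof (abs_conv _ _ _ _ HK Hb HxK) as C1.
    assert (HL : 0 < L) by lra.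
    pose proof (abs_conv _ _ _ _ HL Hbb Hx) as C2.
    pose proof (Series_correct _ (ex_series_Rabs _ C2)) as A2.
    pose proof (is_series_mult _ _ _ _ A1 A2 C1 C2) as A3.
    assert (A4 : is_series (fun n => sum_f_R0 (fun k => a k * (x - x0) ^ k * (binv a (n - k) * (x - x0) ^ (n - k)))
                 n) 1).
    { apply (fin_series' _ 0).
      - intros [|m] Hm; [lia|].
        transitivity (PS_mult a (binv a) (S m) * (x - x0) ^ (S m)).
        + unfold PS_mult. rewrite Rmult_comm, scal_sum. apply sum_eq. intros i Hi.
          replace ((x - x0) ^ S m) with ((x - x0) ^ i * (x - x0) ^ (S m - i))
            by (rewrite <- pow_add; f_equal; lia). ring.
        + rewrite PS_mult_binv by exact Hg. ring.
      - simpl. unfold binv, srec; simpl. field. exact Hg. }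
    apply is_series_unique in A3. apply is_series_unique in A4.
    rewrite A4 in A3.
    assert (Hgx : g x <> 0) by (intro E; rewrite E in A3; lra).
    replace (/ g x) with (Series (fun n => binv a n * (x - x0) ^ n)).
    + exact A2.
    + apply (Rmult_eq_reg_l (g x)); [|exact Hgx]. rewrite Rinv_r by exact Hgx. lra.
Qed.

Lemma sumR_S n f : sumR (S n) f = sumR n f + f n.
Proof. reflexivity. Qed.

Lemma sumR_ext n f g : (forall i, (i < n)%nat -> f i = g i) -> sumR n f = sumR n g.
Proof. induction n as [|n IH]; intro H; simpl; [reflexivity|]. rewrite IH, H by (auto; lia). reflexivity. Qed.

Lemma sumR_plus n f g : sumR n (fun i => f i + g i) = sumR n f + sumR n g.
Proof. induction n as [|n IH]; simpl; [ring|]. rewrite IH. ring. Qed.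

Lemma sumR_scal n c f : sumR n (fun i => c * f i) = c * sumR n f.
Proof. induction n as [|n IH]; simpl; [ring|]. rewrite IH. ring. Qed.

Lemma sumR_scal_r n c f : sumR n (fun i => f i * c) = sumR n f * c.
Proof. induction n as [|n IH]; simpl; [ring|]. rewrite IH. ring. Qed.

Lemma sumR_minus n f g : sumR n (fun i => f i - g i) = sumR n f - sumR n g.
Proof. induction n as [|n IH]; simpl; [ring|]. rewrite IH. ring. Qed.

Lemma sumR_zero n f : (forall i, (i < n)%nat -> f i = 0) -> sumR n f = 0.
Proof. intro H. rewrite (sumR_ext n f (fun _ => 0)) by auto. induction n; simpl; [ring|]. rewrite IHn; [ring|]. auto. Qed.

Lemma sumR_swap n m f :
  sumR n (fun i => sumR m (fun j => f i j)) = sumR m (fun j => sumR n (fun i => f i j)).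
Proof.
  induction n as [|n IH]; simpl.
  - rewrite sumR_zero; auto.
  - rewrite IH, <- sumR_plus. reflexivity.
Qed.

Lemma sumR_nonneg n f : (forall i, (i < n)%nat -> 0 <= f i) -> 0 <= sumR n f.
Proof. induction n as [|n IH]; intro H; simpl; [lra|]. pose proof (H n (Nat.lt_succ_diag_r n)).
  assert (0 <= sumR n f) by (apply IH; intros; apply H; lia). lra. Qed.

Lemma sumR_trunc n m f : (m <= n)%nat -> (forall i, (m <= i)%nat -> (i < n)%nat -> f i = 0) ->
  sumR n f = sumR m f.
Proof.
  intros Hmn. induction Hmn as [|n Hmn IH]; intro H; [reflexivity|].
  simpl. rewrite IH, (H n) by (auto; lia). ring.
Qed.

Lemma sumR_le_trunc n m f : (m <= n)%nat -> (forall i, (i < n)%nat -> 0 <= f i) ->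
  sumR m f <= sumR n f.
Proof.
  intros Hmn. induction Hmn as [|n Hmn IH]; intro H; [lra|].
  simpl. pose proof (H n (Nat.lt_succ_diag_r n)).
  assert (sumR m f <= sumR n f) by (apply IH; intros; apply H; lia). lra.
Qed.

Lemma sumR_single n f j : (j < n)%nat -> (forall i, (i < n)%nat -> i <> j -> f i = 0) ->
  sumR n f = f j.
Proof.
  intros Hj H. rewrite (sumR_trunc n (S j) f) by (auto; intros; apply H; lia).
  simpl. rewrite sumR_zero; [ring|]. intros; apply H; lia.
Qed.

Lemma sumR_ge_term n f j : (forall i, (i < n)%nat -> 0 <= f i) -> (j < n)%nat -> f j <= sumR n f.
Proof.
  intros H Hj.
  replace (f j) with (sumR (S j) f - sumR j f) by (simpl; ring).
  pose proof (sumR_le_trunc n (S j) f Hj H).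
  assert (0 <= sumR j f) by (apply sumR_nonneg; intros; apply H; lia). lra.
Qed.

Lemma sumR_shift n f : sumR (S n) f = f O + sumR n (fun i => f (S i)).
Proof. induction n as [|n IH]; simpl in *; [ring|]. rewrite IH. ring. Qed.

Lemma sumR_rev n : forall f, sumR n (fun i => f (n - 1 - i)%nat) = sumR n f.
Proof.
  induction n as [|n IH]; intro f; [reflexivity|].
  rewrite (sumR_shift n f). cbn [sumR].
  replace (S n - 1 - n)%nat with O by lia.
  rewrite <- (IH (fun i => f (S i))).
  rewrite (sumR_ext n (fun i => f (S n - 1 - i)%nat) (fun i => f (S (n - 1 - i)))) by (intros; f_equal; lia).
  ring.
Qed.

Lemma sumR_f_R0 n f : sumR (S n) f = sum_f_R0 f n.
Proof. induction n as [|n IH]; simpl in *; [ring|]. rewrite <- IH. reflexivity. Qed.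

Lemma is_series_scalR (c : R) (a : nat -> R) (l : R) :
  is_series a l -> is_series (fun n => c * a n) (c * l).
Proof.
  intro H. apply (@is_series_scal R_AbsRing R_NormedModule c) in H. exact H.
Qed.

Lemma indZ_eq x y : x = y -> indZ x y = 1.
Proof. intros ->. unfold indZ. destruct (Z.eq_dec y y); [reflexivity|congruence]. Qed.
Lemma indZ_neq x y : x <> y -> indZ x y = 0.
Proof. intros H. unfold indZ. destruct (Z.eq_dec x y); [congruence|reflexivity]. Qed.
Lemma indZ_nonneg x y : 0 <= indZ x y.
Proof. unfold indZ. destruct (Z.eq_dec x y); lra. Qed.

Lemma indZ_part n y : (0 <= y < Z.of_nat n)%Z -> sumR n (fun v => indZ y (Z.of_nat v)) = 1.
Proof.
  intro Hy. rewrite (sumR_single n _ (Z.to_nat y)) by (try lia; intros i Hi Hne; apply indZ_neq; lia).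
  apply indZ_eq. lia.
Qed.

Lemma poisson_0 lam : poisson lam O = exp (- lam).
Proof. unfold poisson. simpl. field. Qed.

Lemma poisson_nonneg lam s : 0 <= lam -> 0 <= poisson lam s.
Proof.
  intro H. unfold poisson. apply Rmult_le_pos; [apply Rmult_le_pos; [left; apply exp_pos|apply pow_le; lra]|].
  left. apply Rinv_0_lt_compat, INR_fact_lt_0.
Qed.

Lemma poisson_pos lam s : 0 < lam -> 0 < poisson lam s.
Proof.
  intro H. unfold poisson. apply Rmult_lt_0_compat; [apply Rmult_lt_0_compat; [apply exp_pos|apply pow_lt; lra]|].
  apply Rinv_0_lt_compat, INR_fact_lt_0.
Qed.

Lemma poisson_series lam : is_series (poisson lam) 1.
Proof.
  pose proof (is_exp_Reals lam) as He. apply is_pseries_R in He.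
  apply (@is_series_scal R_AbsRing R_NormedModule (exp (- lam))) in He.
  replace 1 with (scal (exp (- lam)) (exp lam)).
  - eapply is_series_ext; [|exact He]. intro n. cbv beta. unfold poisson, scal; simpl; unfold mult; simpl.
    field. apply INR_fact_neq_0.
  - unfold scal; simpl; unfold mult; simpl. rewrite <- exp_plus. replace (- lam + lam) with 0 by ring.
    apply exp_0.
Qed.

Lemma poisson_psum_le lam n : 0 <= lam -> sumR n (poisson lam) <= 1.
Proof.
  intro H. destruct n as [|n]; [simpl; lra|]. rewrite sumR_f_R0.
  apply sum_incr; [|intro; apply poisson_nonneg, H].
  pose proof (poisson_series lam) as Hs. apply is_series_Reals in Hs. exact Hs.
Qed.

Lemma poisson_zero s : poisson 0 s = match s with O => 1 | _ => 0 end.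
Proof. unfold poisson. rewrite Ropp_0, exp_0. destruct s; simpl; unfold Rdiv; [rewrite Rinv_1|]; ring. Qed.

Lemma series_tail lam g N C : (forall s, (N <= s)%nat -> g s = C) ->
  Series (fun s => poisson lam s * g s) = sumR N (fun s => poisson lam s * g s) + C * (1 - sumR N (poisson lam)).
Proof.
  intro Hg. apply is_series_unique.
  set (d := fun s => poisson lam s * (g s - C)).
  assert (Hd : is_series d (sumR N d)).
  { apply (fin_series' _ N).
    - intros m Hm. unfold d. rewrite Hg by lia. ring.
    - rewrite <- sumR_f_R0. cbn [sumR]. replace (d N) with 0 by (unfold d; rewrite Hg by lia; ring). ring. }
  pose proof (@is_series_scal R_AbsRing R_NormedModule C _ _ (poisson_series lam)) as Hp.
  pose proof (is_series_plus _ _ _ _ Hp Hd) as H3.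
  replace (sumR N (fun s => poisson lam s * g s) + C * (1 - sumR N (poisson lam)))
    with (plus (scal C 1) (sumR N d)).
  - eapply is_series_ext; [|exact H3]. intro n. cbv beta. unfold d, plus, scal; simpl; unfold mult; simpl. ring.
  - unfold d, plus, scal; simpl; unfold mult; simpl.
    unfold Rminus. rewrite (sumR_ext N (fun s => poisson lam s * (g s + - C)) (fun s => poisson lam s * g s + (-C) * poisson lam s))
      by (intros; ring).
    rewrite sumR_plus, sumR_scal. ring.
Qed.

Definition binR (n t : nat) : R := if (t <=? n)%nat then Binomial.C n t else 0.

Lemma conv_pow_bern p x : p O = 1 - x -> p 1%nat = x -> (forall j, (2 <= j)%nat -> p j = 0) ->
  forall m t, conv_pow p m t = binR m t * x ^ t * (1 - x) ^ (m - t).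
Proof.
  intros H0 H1 H2. induction m as [|m IH]; intro t.
  - unfold binR. destruct t; cbn [conv_pow Nat.leb]; [rewrite C_n_n; simpl; ring|simpl; ring].
  - destruct t as [|t].
    + cbn [conv_pow sumR]. rewrite Nat.sub_0_r, IH, H0, Nat.sub_0_r. unfold binR. cbn [Nat.leb]. rewrite !C_n_0. simpl. ring.
    + change (conv_pow p (S m) (S t)) with (sumR (S (S t)) (fun a => conv_pow p m a * p (S t - a)%nat)).
      rewrite !sumR_S. rewrite sumR_zero by (intros i Hi; rewrite H2 by lia; ring).
      replace (S t - t)%nat with 1%nat by lia. rewrite Nat.sub_diag, H1, H0, !IH.
      unfold binR.
      destruct (Nat.leb_spec t m); destruct (Nat.leb_spec (S t) m); destruct (Nat.leb_spec (S t) (S m)); try lia.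
      * rewrite <- pascal by lia.
        replace (m - t)%nat with (S (m - S t)) by lia. simpl (S m - S t)%nat.
        replace (m - t)%nat with (S (m - S t)) by lia. simpl. ring.
      * assert (t = m) by lia. subst t. rewrite !C_n_n, !Nat.sub_diag. simpl. ring.
      * ring.
Qed.

Lemma conv_pow_mass p x : p O = 1 - x -> p 1%nat = x -> (forall j, (2 <= j)%nat -> p j = 0) ->
  forall m, sumR (S m) (conv_pow p m) = 1.
Proof.
  intros H0 H1 H2 m. rewrite sumR_f_R0.
  rewrite (sum_eq _ (fun i => Binomial.C m i * x ^ i * (1 - x) ^ (m - i))).
  - rewrite <- binomial. replace (x + (1 - x)) with 1 by ring. apply pow1.
  - intros i Hi. rewrite (conv_pow_bern p x H0 H1 H2). unfold binR.
    destruct (Nat.leb_spec i m); [reflexivity|lia].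
Qed.

Lemma conv_pow_at0 p m : conv_pow p m O = p O ^ m.
Proof. induction m as [|m IH]; [reflexivity|]. simpl. rewrite IH. ring. Qed.

Lemma conv_pow_nonneg p : (forall j, 0 <= p j) -> forall m t, 0 <= conv_pow p m t.
Proof.
  intros Hp m. induction m as [|m IH]; intro t.
  - destruct t; simpl; lra.
  - cbn [conv_pow]. apply sumR_nonneg. intros i _. apply Rmult_le_pos; auto.
Qed.

Lemma pmf2_facts p : is_pmf 2 p -> p O = 1 - p 1%nat /\ (forall j, (2 <= j)%nat -> p j = 0).
Proof.
  intros (_ & H2 & H3). split; [|exact H2]. simpl in H3. lra.
Qed.

Lemma compound_bern mu p s : is_pmf 2 p ->
  compound_poisson mu p s = poisson (mu * p 1%nat) s.
Proof.
  intro Hp. destruct (pmf2_facts p Hp) as [H0 H2].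
  set (x := p 1%nat) in *.
  unfold compound_poisson. apply is_series_unique.
  set (a := fun n => poisson mu n * conv_pow p n s).
  assert (Ha : forall m, a (s + m)%nat =
     (exp (- mu) * (mu * x) ^ s / INR (fact s)) * ((mu * (1 - x)) ^ m / INR (fact m))).
  { intro m. unfold a. rewrite (conv_pow_bern p x H0 eq_refl H2). unfold binR.
    destruct (Nat.leb_spec s (s + m)); [|lia].
    replace (s + m - s)%nat with m by lia. unfold Binomial.C, poisson.
    replace (s + m - s)%nat with m by lia.
    rewrite !Rpow_mult_distr, pow_add. field.
    split; [apply INR_fact_neq_0|]. split; apply INR_fact_neq_0. }
  assert (Hz : forall n, (n < s)%nat -> a n = 0).
  { intros n Hn. unfold a. rewrite (conv_pow_bern p x H0 eq_refl H2). unfold binR.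
    destruct (Nat.leb_spec s n); [lia|ring]. }
  pose proof (is_exp_Reals (mu * (1 - x))) as He. apply is_pseries_R in He.
  apply (is_series_scalR (exp (- mu) * (mu * x) ^ s / INR (fact s))) in He.
  assert (Hv : (exp (- mu) * (mu * x) ^ s / INR (fact s)) * (exp (mu * (1 - x))) = poisson (mu * x) s).
  { unfold poisson.
    replace (exp (- (mu * x))) with (exp (- mu) * exp (mu * (1 - x))) by (rewrite <- exp_plus; f_equal; ring).
    field. apply INR_fact_neq_0. }
  rewrite Hv in He.
  assert (Hsh : is_series (fun m => a (s + m)%nat) (poisson (mu * x) s)).
  { eapply is_series_ext; [|exact He]. intro m. cbv beta. rewrite Ha. match goal with |- ?A = ?B => change (@eq R A B) end.
    field. split; apply INR_fact_neq_0. }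
  destruct s as [|s'].
  - eapply is_series_ext; [|exact Hsh]. intro n. reflexivity.
  - apply (is_series_decr_n a (S s')); [lia|].
    match goal with |- is_series _ ?L => replace L with (poisson (mu * x) (S s')) end.
    + exact Hsh.
    + rewrite sum_n_Reals. rewrite sum_eq_R0 by (intros; apply Hz; simpl in *; lia).
      unfold plus, opp; simpl. ring.
Qed.

Lemma AnAt_constf (f : R -> R) c x0 : (forall x, f x = c) -> AnAt f x0.
Proof. intro H. apply (AnAt_ext (fun _ => c)); [intro; symmetry; apply H|apply AnAt_const]. Qed.

Lemma AnAt_sumR (f : R -> nat -> R) n x0 :
  (forall i, (i < n)%nat -> AnAt (fun x => f x i) x0) -> AnAt (fun x => sumR n (f x)) x0.
Proof.
  induction n as [|n IH]; intro H.
  - apply (AnAt_constf _ 0). reflexivity.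
  - apply (AnAt_ext (fun x => sumR n (f x) + f x n)); [reflexivity|].
    apply AnAt_plus; [apply IH; intros; apply H; lia|apply H; lia].
Qed.

Lemma AnAt_pow (g : R -> R) n x0 : AnAt g x0 -> AnAt (fun x => g x ^ n) x0.
Proof.
  intro H. induction n as [|n IH].
  - apply (AnAt_constf _ 1). reflexivity.
  - apply (AnAt_ext (fun x => g x * g x ^ n)); [reflexivity|]. apply AnAt_mult; assumption.
Qed.

Lemma AnAt_minus (f g : R -> R) x0 : AnAt f x0 -> AnAt g x0 -> AnAt (fun x => f x - g x) x0.
Proof.
  intros Hf Hg. apply (AnAt_ext (fun x => f x + (-1) * g x)); [intro; ring|].
  apply AnAt_plus; [exact Hf|]. apply AnAt_mult; [apply AnAt_const|exact Hg].
Qed.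

Lemma AnAt_div (f g : R -> R) x0 : AnAt f x0 -> AnAt g x0 -> g x0 <> 0 -> AnAt (fun x => f x / g x) x0.
Proof.
  intros Hf Hg Hn. apply AnAt_mult; [exact Hf|]. apply AnAt_inv; assumption.
Qed.

Lemma AnAt_poisson s x0 : AnAt (fun x => poisson x s) x0.
Proof.
  apply (AnAt_ext (fun x => exp ((-1) * x) * x ^ s * / INR (fact s))).
  { intro x. unfold poisson. replace ((-1) * x) with (- x) by ring. reflexivity. }
  apply AnAt_mult; [apply AnAt_mult|apply AnAt_const].
  - apply AnAt_exp.
  - apply AnAt_pow, AnAt_id.
Qed.

Lemma AnAt_conv_pow (P : R -> nat -> R) x0 :
  (forall j, AnAt (fun x => P x j) x0) -> forall m t, AnAt (fun x => conv_pow (P x) m t) x0.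
Proof.
  intros HP m. induction m as [|m IH]; intro t.
  - destruct t; [apply (AnAt_constf _ 1)|apply (AnAt_constf _ 0)]; reflexivity.
  - apply (AnAt_ext (fun x => sumR (S t) (fun a => conv_pow (P x) m a * P x (t - a)%nat))); [reflexivity|].
    apply AnAt_sumR. intros i _. apply AnAt_mult; [apply IH|apply HP].
Qed.

Definition Tl (l : nat) (lam : R) := 1 - sumR l (poisson lam).
Definition E3 (l : nat) (lam : R) (a v : nat) : R :=
  sumR l (fun s => poisson lam s *
    indZ (clampZ 0 (Z.of_nat l - 1) (Z.of_nat l - Z.of_nat a - Z.of_nat s)) (Z.of_nat v))
  + indZ 0 (Z.of_nat v) * Tl l lam.
Definition E4 (l : nat) (lam : R) (a1 a2 v : nat) : R :=
  sumR l (fun s => poisson lam s *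
    indZ (clampZ 0 1 (Z.of_nat l - Z.of_nat a1 - Z.of_nat a2 - Z.of_nat s)) (Z.of_nat v))
  + indZ 0 (Z.of_nat v) * Tl l lam.
Definition Kf l lam a w := E3 l lam a (l - 1 - w).
Definition hstep l lam (w : nat) (f : nat -> R) : R :=
  exp lam * (f w - sumR (S w) (fun a => f a * Kf l lam a w)).
Definition hh l lam := srec 1 (hstep l lam).
Definition Zs l lam := sumR l (hh l lam).
Definition pi l lam (a : nat) : R := if (a <? l)%nat then hh l lam a / Zs l lam else 0.

Lemma exp_inv lam : exp lam * exp (- lam) = 1.
Proof. rewrite <- exp_plus. replace (lam + - lam) with 0 by ring. apply exp_0. Qed.

Lemma hh_0 l lam : hh l lam O = 1.
Proof. reflexivity. Qed.

Lemma hh_S l lam w :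
  hh l lam (S w) = exp lam * (hh l lam w - sumR (S w) (fun a => hh l lam a * Kf l lam a w)).
Proof.
  unfold hh. rewrite srec_S; [reflexivity|].
  intros f g H. unfold hstep. rewrite H by lia.
  rewrite (sumR_ext (S w) (fun a => f a * Kf l lam a w) (fun a => g a * Kf l lam a w))
    by (intros; rewrite H by lia; reflexivity). reflexivity.
Qed.

Lemma hh_S' l lam w :
  hh l lam (S w) * poisson lam O = hh l lam w - sumR (S w) (fun a => hh l lam a * Kf l lam a w).
Proof.
  rewrite hh_S, poisson_0. rewrite Rmult_comm, <- Rmult_assoc, (Rmult_comm (exp (- lam))), exp_inv. ring.
Qed.

Lemma Tl_nonneg l lam : 0 <= lam -> 0 <= Tl l lam.
Proof. intro H. unfold Tl. pose proof (poisson_psum_le lam l H). lra. Qed.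

Lemma Tl_pos l lam : 0 < lam -> 0 < Tl l lam.
Proof.
  intro H. unfold Tl. pose proof (poisson_psum_le lam (S l) ltac:(lra)). simpl in H0.
  pose proof (poisson_pos lam l H). lra.
Qed.

Lemma E3_nonneg l lam a v : 0 <= lam -> 0 <= E3 l lam a v.
Proof.
  intro H. unfold E3. apply Rplus_le_le_0_compat.
  - apply sumR_nonneg. intros. apply Rmult_le_pos; [apply poisson_nonneg, H|apply indZ_nonneg].
  - apply Rmult_le_pos; [apply indZ_nonneg|apply Tl_nonneg, H].
Qed.

Lemma E4_nonneg l lam a1 a2 v : 0 <= lam -> 0 <= E4 l lam a1 a2 v.
Proof.
  intro H. unfold E4. apply Rplus_le_le_0_compat.
  - apply sumR_nonneg. intros. apply Rmult_le_pos; [apply poisson_nonneg, H|apply indZ_nonneg].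
  - apply Rmult_le_pos; [apply indZ_nonneg|apply Tl_nonneg, H].
Qed.

Lemma E_part l lam n (g : nat -> Z) : (1 <= n)%nat -> (forall s, (0 <= g s < Z.of_nat n)%Z) ->
  sumR n (fun v => sumR l (fun s => poisson lam s * indZ (g s) (Z.of_nat v)) + indZ 0 (Z.of_nat v) * Tl l lam) = 1.
Proof.
  intros Hn Hg. rewrite sumR_plus, sumR_swap, sumR_scal_r.
  rewrite (sumR_ext l (fun s => sumR n (fun v => poisson lam s * indZ (g s) (Z.of_nat v))) (poisson lam)).
  - rewrite indZ_part by lia. unfold Tl. ring.
  - intros s _. rewrite sumR_scal, indZ_part by apply Hg. ring.
Qed.

Lemma E3_sum l lam a : (2 <= l)%nat -> sumR l (E3 l lam a) = 1.
Proof.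
  intro Hl. unfold E3. apply E_part; [lia|]. intro s. unfold clampZ. lia.
Qed.

Lemma E4_sum l lam a1 a2 : sumR 2 (E4 l lam a1 a2) = 1.
Proof.
  unfold E4. apply E_part; [lia|]. intro s. unfold clampZ. lia.
Qed.

Lemma E3_high l lam a v : (2 <= l)%nat -> (l <= v)%nat -> E3 l lam a v = 0.
Proof.
  intros Hl Hv. unfold E3. rewrite sumR_zero.
  - rewrite indZ_neq by lia. ring.
  - intros s _. rewrite indZ_neq by (unfold clampZ; lia). ring.
Qed.

Lemma E4_high l lam a1 a2 v : (2 <= v)%nat -> E4 l lam a1 a2 v = 0.
Proof.
  intros Hv. unfold E4. rewrite sumR_zero.
  - rewrite indZ_neq by lia. ring.
  - intros s _. rewrite indZ_neq by (unfold clampZ; lia). ring.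
Qed.

Lemma Kf_zero l lam a w : (w < l - 1)%nat -> (w + 1 < a)%nat -> Kf l lam a w = 0.
Proof.
  intros Hw Ha. unfold Kf, E3. rewrite sumR_zero.
  - rewrite indZ_neq by lia. ring.
  - intros s _. rewrite indZ_neq by (unfold clampZ; lia). ring.
Qed.

Lemma Kf_diag l lam w : (w < l - 1)%nat -> Kf l lam (S w) w = poisson lam O.
Proof.
  intros Hw. unfold Kf, E3. rewrite (indZ_neq 0) by lia. rewrite Rmult_0_l, Rplus_0_r.
  rewrite (sumR_single l _ O) by (try lia; intros i Hi Hne; rewrite indZ_neq by (unfold clampZ; lia); ring).
  rewrite indZ_eq by (unfold clampZ; lia). ring.
Qed.

Lemma Kf_nonneg l lam a w : 0 <= lam -> 0 <= Kf l lam a w.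
Proof. intro H. apply E3_nonneg, H. Qed.

Lemma Kf_sum l lam a : (2 <= l)%nat -> sumR l (Kf l lam a) = 1.
Proof.
  intro Hl. unfold Kf. rewrite (sumR_rev l (E3 l lam a)). apply E3_sum, Hl.
Qed.

Lemma stat_split l lam (f : nat -> R) w : (w < l - 1)%nat ->
  sumR l (fun a => f a * Kf l lam a w) =
  sumR (S w) (fun a => f a * Kf l lam a w) + f (S w) * poisson lam O.
Proof.
  intro Hw. rewrite (sumR_trunc l (S (S w))) by (try lia; intros i Hi _; rewrite Kf_zero by lia; ring).
  rewrite sumR_S, Kf_diag by lia. reflexivity.
Qed.

Lemma hh_stat l lam w : (w < l - 1)%nat ->
  sumR l (fun a => hh l lam a * Kf l lam a w) = hh l lam w.
Proof.
  intro Hw. rewrite stat_split by exact Hw. rewrite hh_S'. ring.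
Qed.

Lemma stat_unique l lam (p : nat -> R) :
  (forall w, (w < l - 1)%nat -> p w = sumR l (fun a => p a * Kf l lam a w)) ->
  forall w, (w < l)%nat -> p w = p O * hh l lam w.
Proof.
  intros Hs.
  assert (H : forall n w, (w <= n)%nat -> (w < l)%nat -> p w = p O * hh l lam w).
  { induction n as [|n IH]; intros w Hwn Hwl.
    - assert (w = O) by lia. subst w. rewrite hh_0. ring.
    - destruct (Nat.leb_spec w n); [apply IH; lia|].
      assert (w = S n) by lia. subst w.
      pose proof (Hs n ltac:(lia)) as E. rewrite stat_split in E by lia.
      rewrite (sumR_ext (S n) (fun a => p a * Kf l lam a n) (fun a => p O * (hh l lam a * Kf l lam a n)))
        in E by (intros i Hi; rewrite (IH i) by lia; ring).
      rewrite sumR_scal in E. rewrite (IH n) in E by lia.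
      assert (E2 : p (S n) * poisson lam O = p O * (hh l lam (S n) * poisson lam O)).
      { rewrite hh_S'. lra. }
      rewrite poisson_0 in E2.
      pose proof (exp_pos (- lam)).
      apply (Rmult_eq_reg_r (exp (- lam))); [lra|lra]. }
  intros w Hw. apply (H w w); lia.
Qed.

Lemma hh_cut l lam w : (S w < l)%nat ->
  hh l lam (S w) * poisson lam O =
  sumR (S w) (fun a => hh l lam a * (1 - sumR (S w) (Kf l lam a))).
Proof.
  induction w as [|w IH]; intro Hw.
  - rewrite hh_S'. simpl. rewrite hh_0. ring.
  - rewrite hh_S'.
    rewrite (sumR_ext (S (S w)) (fun a => hh l lam a * (1 - sumR (S (S w)) (Kf l lam a)))
       (fun a => hh l lam a * (1 - sumR (S w) (Kf l lam a)) - hh l lam a * Kf l lam a (S w)))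
      by (intros; rewrite sumR_S; ring).
    rewrite sumR_minus. rewrite (sumR_S (S w) (fun a => hh l lam a * (1 - sumR (S w) (Kf l lam a)))).
    rewrite <- IH by lia.
    assert (C : sumR (S w) (Kf l lam (S w)) = poisson lam O).
    { rewrite sumR_S, sumR_zero by (intros; apply Kf_zero; lia). rewrite Kf_diag by lia. ring. }
    rewrite C. ring.
Qed.

Lemma hh_nonneg l lam : (2 <= l)%nat -> 0 < lam -> forall w, (w < l)%nat -> 0 <= hh l lam w.
Proof.
  intros Hl Hlam.
  assert (H : forall n w, (w <= n)%nat -> (w < l)%nat -> 0 <= hh l lam w).
  { induction n as [|n IH]; intros w Hwn Hwl.
    - assert (w = O) by lia. subst w. rewrite hh_0. lra.
    - destruct (Nat.leb_spec w n); [apply IH; lia|].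
      assert (w = S n) by lia. subst w.
      assert (E : hh l lam (S n) = exp lam * (hh l lam (S n) * poisson lam O)).
      { rewrite poisson_0. rewrite (Rmult_comm (hh _ _ _)), <- Rmult_assoc, exp_inv. ring. }
      rewrite E, hh_cut by exact Hwl.
      apply Rmult_le_pos; [left; apply exp_pos|].
      apply sumR_nonneg. intros i Hi. apply Rmult_le_pos; [apply IH; lia|].
      pose proof (sumR_le_trunc l (S n) (Kf l lam i) ltac:(lia)
        (fun j _ => Kf_nonneg l lam i j ltac:(lra))).
      rewrite Kf_sum in H0 by exact Hl. lra. }
  intros w Hw. apply (H w w); lia.
Qed.

Lemma Zs_ge1 l lam : (2 <= l)%nat -> 0 < lam -> 1 <= Zs l lam.
Proof.
  intros Hl Hlam. unfold Zs. rewrite <- (hh_0 l lam) at 1.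
  apply sumR_ge_term; [|lia]. intros. apply hh_nonneg; assumption.
Qed.

Lemma pi_nonneg l lam a : (2 <= l)%nat -> 0 < lam -> 0 <= pi l lam a.
Proof.
  intros Hl Hlam. unfold pi. destruct (Nat.ltb_spec a l); [|lra].
  pose proof (Zs_ge1 l lam Hl Hlam). apply Rmult_le_pos; [apply hh_nonneg; auto|].
  left. apply Rinv_0_lt_compat. lra.
Qed.

Lemma pi_lt l lam a : (a < l)%nat -> pi l lam a = hh l lam a / Zs l lam.
Proof. intro H. unfold pi. destruct (Nat.ltb_spec a l); [reflexivity|lia]. Qed.

Lemma pi_high l lam a : (l <= a)%nat -> pi l lam a = 0.
Proof. intro H. unfold pi. destruct (Nat.ltb_spec a l); [lia|reflexivity]. Qed.

Lemma pi_sum l lam : Zs l lam <> 0 -> sumR l (pi l lam) = 1.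
Proof.
  intro HZ. rewrite (sumR_ext l _ (fun a => hh l lam a * / Zs l lam)) by (intros; apply pi_lt; auto).
  rewrite sumR_scal_r. fold (Zs l lam). field. exact HZ.
Qed.

Lemma pi_stat l lam : (2 <= l)%nat -> Zs l lam <> 0 ->
  forall w, (w < l)%nat -> pi l lam w = sumR l (fun a => pi l lam a * Kf l lam a w).
Proof.
  intros Hl HZ w Hw.
  destruct (Nat.ltb_spec w (l - 1)) as [Hw'|Hw'].
  - rewrite (sumR_ext l _ (fun a => / Zs l lam * (hh l lam a * Kf l lam a w)))
      by (intros; rewrite pi_lt by auto; unfold Rdiv; ring).
    rewrite sumR_scal, hh_stat, pi_lt by auto. unfold Rdiv. ring.
  - assert (w = l - 1)%nat by lia. subst w.
    assert (Hk : forall a, Kf l lam a (l - 1) = 1 - sumR (l - 1) (Kf l lam a)).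
    { intro a. pose proof (Kf_sum l lam a Hl) as S1.
      replace l with (S (l - 1)) in S1 at 1 by lia. rewrite sumR_S in S1. lra. }
    rewrite (sumR_ext l _ (fun a => pi l lam a - sumR (l - 1) (fun w => pi l lam a * Kf l lam a w)))
      by (intros; rewrite Hk, sumR_scal; ring).
    rewrite sumR_minus, pi_sum by exact HZ. rewrite sumR_swap.
    rewrite (sumR_ext (l - 1) (fun w => sumR l (fun a => pi l lam a * Kf l lam a w)) (pi l lam)).
    + pose proof (pi_sum l lam HZ) as S1. replace l with (S (l - 1)) in S1 at 1 by lia.
      rewrite sumR_S in S1. lra.
    + intros w0 Hw0. rewrite (sumR_ext l _ (fun a => / Zs l lam * (hh l lam a * Kf l lam a w0)))
        by (intros; rewrite pi_lt by auto; unfold Rdiv; ring).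
      rewrite sumR_scal, hh_stat, pi_lt by lia. unfold Rdiv. ring.
Qed.

Definition bac l lam (v : nat) : R := sumR l (fun a => pi l lam a * E3 l lam a v).
Definition bar l lam (v : nat) : R :=
  sumR l (fun a1 => sumR l (fun a2 => pi l lam a1 * pi l lam a2 * E4 l lam a1 a2 v)).
Definition arbf (k : nat) (p : nat -> R) (v : nat) : R :=
  sumR k (fun t => conv_pow p (k - 1) t * indZ (Z.max 0 (1 - Z.of_nat t)) (Z.of_nat v)).
Definition arb k l lam := arbf k (bar l lam).
Definition qq k l lam := arb k l lam 1%nat.
Definition cc k l lam := lam / (INR k * qq k l lam).
Definition FF k l lam : Dist4 * R := (mkDist4 (pi l lam) (bac l lam) (arb k l lam) (bar l lam), cc k l lam).

Lemma bac_pmf l lam : (2 <= l)%nat -> 0 < lam -> is_pmf l (bac l lam).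
Proof.
  intros Hl Hlam. pose proof (Zs_ge1 l lam Hl Hlam) as HZ.
  split; [|split].
  - intro v. apply sumR_nonneg. intros. apply Rmult_le_pos; [apply pi_nonneg; auto|apply E3_nonneg; lra].
  - intros v Hv. unfold bac. apply sumR_zero. intros. rewrite E3_high by auto. ring.
  - unfold bac. rewrite sumR_swap.
    rewrite (sumR_ext l (fun a => sumR l (fun v => pi l lam a * E3 l lam a v)) (pi l lam))
      by (intros; rewrite sumR_scal, E3_sum by auto; ring).
    apply pi_sum. lra.
Qed.

Lemma bar_pmf l lam : (2 <= l)%nat -> 0 < lam -> is_pmf 2 (bar l lam).
Proof.
  intros Hl Hlam. pose proof (Zs_ge1 l lam Hl Hlam) as HZ.
  split; [|split].
  - intro v. apply sumR_nonneg. intros. apply sumR_nonneg. intros.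
    apply Rmult_le_pos; [apply Rmult_le_pos; apply pi_nonneg; auto|apply E4_nonneg; lra].
  - intros v Hv. unfold bar. apply sumR_zero. intros. apply sumR_zero. intros.
    rewrite E4_high by auto. ring.
  - unfold bar. rewrite sumR_swap.
    rewrite (sumR_ext l _ (pi l lam)).
    + apply pi_sum. lra.
    + intros a1 _. rewrite sumR_swap.
      rewrite (sumR_ext l _ (fun a2 => pi l lam a1 * pi l lam a2))
        by (intros; rewrite sumR_scal, E4_sum; ring).
      rewrite sumR_scal, pi_sum by lra. ring.
Qed.

Lemma bar0_pos l lam : (2 <= l)%nat -> 0 < lam -> 0 < bar l lam O.
Proof.
  intros Hl Hlam. pose proof (Zs_ge1 l lam Hl Hlam) as HZ.
  assert (Hp0 : 0 < pi l lam O).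
  { rewrite pi_lt by lia. rewrite hh_0. apply Rdiv_lt_0_compat; lra. }
  assert (HE : 0 < E4 l lam O O O).
  { unfold E4. rewrite indZ_eq by reflexivity.
    pose proof (Tl_pos l lam Hlam).
    assert (0 <= sumR l (fun s => poisson lam s *
      indZ (clampZ 0 1 (Z.of_nat l - Z.of_nat 0 - Z.of_nat 0 - Z.of_nat s)) (Z.of_nat 0))).
    { apply sumR_nonneg. intros. apply Rmult_le_pos; [apply poisson_nonneg; lra|apply indZ_nonneg]. }
    lra. }
  unfold bar.
  eapply Rlt_le_trans; [|apply (sumR_ge_term l _ O); [|lia]].
  - eapply Rlt_le_trans; [|apply (sumR_ge_term l _ O); [|lia]].
    + apply Rmult_lt_0_compat; [apply Rmult_lt_0_compat|]; assumption.
    + intros. apply Rmult_le_pos; [apply Rmult_le_pos; apply pi_nonneg; auto|apply E4_nonneg; lra].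
  - intros. apply sumR_nonneg. intros.
    apply Rmult_le_pos; [apply Rmult_le_pos; apply pi_nonneg; auto|apply E4_nonneg; lra].
Qed.

Lemma arbf_pmf k p : (1 <= k)%nat -> is_pmf 2 p -> is_pmf 2 (arbf k p).
Proof.
  intros Hk Hp. destruct (pmf2_facts p Hp) as [H0 H2]. destruct Hp as (Hnn & _ & _).
  split; [|split].
  - intro v. apply sumR_nonneg. intros. apply Rmult_le_pos; [apply conv_pow_nonneg, Hnn|apply indZ_nonneg].
  - intros v Hv. unfold arbf. apply sumR_zero. intros. rewrite indZ_neq by lia. ring.
  - unfold arbf. rewrite !sumR_S. change (sumR 0 _) with 0. rewrite Rplus_0_l, <- sumR_plus.
    rewrite (sumR_ext k _ (conv_pow p (k - 1))).
    + replace k with (S (k - 1)) at 1 by lia. apply (conv_pow_mass p (p 1%nat)); auto.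
    + intros t _. rewrite <- Rmult_plus_distr_l.
      assert (Hi : indZ (Z.max 0 (1 - Z.of_nat t)) 0 + indZ (Z.max 0 (1 - Z.of_nat t)) 1 = 1).
      { destruct (Z.eq_dec (Z.max 0 (1 - Z.of_nat t)) 0) as [E|E].
        - rewrite E. rewrite (indZ_eq 0 0), (indZ_neq 0 1) by lia. ring.
        - rewrite (indZ_neq _ 0) by lia. rewrite (indZ_eq _ 1) by lia. ring. }
      change (Z.of_nat 1) with 1%Z. change (Z.of_nat 0) with 0%Z. rewrite Hi. ring.
Qed.

Lemma arbf_1 k p : (1 <= k)%nat -> arbf k p 1%nat = p O ^ (k - 1).
Proof.
  intro Hk. unfold arbf.
  rewrite (sumR_single k _ O) by (try lia; intros i Hi Hne; rewrite indZ_neq by lia; ring).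
  rewrite conv_pow_at0, indZ_eq by reflexivity. ring.
Qed.

Lemma qq_pos k l lam : (2 <= k)%nat -> (2 <= l)%nat -> 0 < lam -> 0 < qq k l lam.
Proof.
  intros Hk Hl Hlam. unfold qq, arb. rewrite arbf_1 by lia. apply pow_lt, bar0_pos; auto.
Qed.

Lemma lam_recover k l lam : (2 <= k)%nat -> (2 <= l)%nat -> 0 < lam ->
  INR k * cc k l lam * qq k l lam = lam.
Proof.
  intros Hk Hl Hlam. pose proof (qq_pos k l lam Hk Hl Hlam).
  assert (0 < INR k) by (apply lt_0_INR; lia).
  unfold cc. field. split; lra.
Qed.

Lemma Series3 l lam a v : (2 <= l)%nat ->
  Series (fun s => poisson lam s *
    indZ (clampZ 0 (Z.of_nat l - 1) (Z.of_nat l - Z.of_nat a - Z.of_nat s)) (Z.of_nat v)) = E3 l lam a v.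
Proof.
  intro Hl. rewrite (series_tail lam _ l (indZ 0 (Z.of_nat v))).
  - unfold E3, Tl. ring.
  - intros s Hs. f_equal. unfold clampZ. lia.
Qed.

Lemma Series4 l lam a1 a2 v :
  Series (fun s => poisson lam s *
    indZ (clampZ 0 1 (Z.of_nat l - Z.of_nat a1 - Z.of_nat a2 - Z.of_nat s)) (Z.of_nat v)) = E4 l lam a1 a2 v.
Proof.
  rewrite (series_tail lam _ l (indZ 0 (Z.of_nat v))).
  - unfold E4, Tl. ring.
  - intros s Hs. f_equal. unfold clampZ. lia.
Qed.

Lemma poisson0_sum n g : (1 <= n)%nat -> sumR n (fun s => poisson 0 s * g s) = g O.
Proof.
  intro Hn. rewrite (sumR_single n _ O).
  - rewrite poisson_zero. ring.
  - lia.
  - intros i Hi Hne. rewrite poisson_zero. destruct i as [|i]; [lia|ring].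
Qed.

Lemma Tl0 l : (1 <= l)%nat -> Tl l 0 = 0.
Proof.
  intro Hl. unfold Tl. rewrite (sumR_ext l (poisson 0) (fun s => poisson 0 s * 1)) by (intros; ring).
  rewrite poisson0_sum by exact Hl. ring.
Qed.

Lemma Kf_lam0 l a w : (2 <= l)%nat ->
  Kf l 0 a w = indZ (clampZ 0 (Z.of_nat l - 1) (Z.of_nat l - Z.of_nat a - Z.of_nat 0)) (Z.of_nat (l - 1 - w)).
Proof.
  intro Hl. unfold Kf, E3. rewrite Tl0 by lia.
  rewrite (poisson0_sum l (fun s => indZ (clampZ 0 (Z.of_nat l - 1) (Z.of_nat l - Z.of_nat a - Z.of_nat s)) (Z.of_nat (l - 1 - w)))) by lia.
  ring.
Qed.

Lemma hh_lam0 l : (2 <= l)%nat -> forall w, (1 <= w)%nat -> hh l 0 w = 0.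
Proof.
  intros Hl.
  assert (H : forall n w, (1 <= w)%nat -> (w <= n)%nat -> hh l 0 w = 0).
  { induction n as [|n IH]; intros w H1 Hwn; [lia|].
    destruct (Nat.leb_spec w n); [apply IH; lia|].
    assert (w = S n) by lia. subst w.
    rewrite hh_S, exp_0.
    destruct n as [|n'].
    - simpl sumR. rewrite hh_0, Kf_lam0 by lia. rewrite indZ_eq by (unfold clampZ; lia). ring.
    - rewrite (IH (S n')) by lia.
      rewrite (sumR_single (S (S n')) _ O) by (try lia; intros i Hi Hne; rewrite (IH i) by lia; ring).
      rewrite hh_0, Kf_lam0 by lia. rewrite indZ_neq by (unfold clampZ; lia). ring. }
  intros w Hw. apply (H w w); lia.
Qed.

Lemma pi_pmf l lam : (2 <= l)%nat -> 0 < lam -> is_pmf l (pi l lam).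
Proof.
  intros Hl Hlam. pose proof (Zs_ge1 l lam Hl Hlam).
  split; [|split].
  - intro; apply pi_nonneg; auto.
  - intros; apply pi_high; auto.
  - apply pi_sum. lra.
Qed.

Lemma FF_sol k l lam : (2 <= k)%nat -> (2 <= l)%nat -> 0 < lam ->
  relaxed_solution k l (fst (FF k l lam)) (snd (FF k l lam)).
Proof.
  intros Hk Hl Hlam. unfold relaxed_solution, FF. cbn [fst snd pACB pBAC pARB pBAR].
  pose proof (Zs_ge1 l lam Hl Hlam) as HZ.
  pose proof (qq_pos k l lam Hk Hl Hlam) as Hq.
  assert (HkR : 0 < INR k) by (apply lt_0_INR; lia).
  assert (Hpa : is_pmf 2 (arb k l lam)) by (apply arbf_pmf; [lia|apply bar_pmf; auto]).
  assert (HS : forall s, compound_poisson (INR k * cc k l lam) (arb k l lam) s = poisson lam s).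
  { intro s. rewrite compound_bern by exact Hpa. f_equal. apply lam_recover; auto. }
  split; [unfold cc; apply Rdiv_lt_0_compat; [lra|apply Rmult_lt_0_compat; lra]|].
  split; [apply pi_pmf; auto|].
  split; [apply bac_pmf; auto|].
  split; [exact Hpa|].
  split; [apply bar_pmf; auto|].
  cbv zeta. split; [|split; [|split]].
  - intro v. destruct (Nat.ltb_spec v l) as [Hv|Hv].
    + rewrite (sumR_single l _ (l - 1 - v)) by (try lia; intros i Hi Hne; rewrite indZ_neq by lia; ring).
      rewrite indZ_eq by lia. rewrite Rmult_1_r. unfold bac.
      rewrite pi_stat by (auto; lra). reflexivity.
    + rewrite pi_high by lia. symmetry. apply sumR_zero. intros. rewrite indZ_neq by lia. ring.
  - intro v. reflexivity.
  - intro v. unfold bac. apply sumR_ext. intros a _. f_equal.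
    rewrite (Series_ext _ (fun s => poisson lam s *
      indZ (clampZ 0 (Z.of_nat l - 1) (Z.of_nat l - Z.of_nat a - Z.of_nat s)) (Z.of_nat v)))
      by (intro; rewrite HS; reflexivity).
    symmetry. apply Series3, Hl.
  - intro v. unfold bar. apply sumR_ext. intros a1 _. apply sumR_ext. intros a2 _. f_equal.
    rewrite (Series_ext _ (fun s => poisson lam s *
      indZ (clampZ 0 1 (Z.of_nat l - Z.of_nat a1 - Z.of_nat a2 - Z.of_nat s)) (Z.of_nat v)))
      by (intro; rewrite HS; reflexivity).
    symmetry. apply Series4.
Qed.

Lemma FF_surj k l rho c : (2 <= k)%nat -> (2 <= l)%nat ->
  relaxed_solution k l rho c -> ~ trivial_solution l rho ->
  exists lam, 0 < lam /\ FF k l lam = (rho, c).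
Proof.
  intros Hk Hl Hsol Hnt. destruct rho as [pa pb pr pbr].
  unfold relaxed_solution in Hsol. cbn [pACB pBAC pARB pBAR] in Hsol. cbv zeta in Hsol.
  destruct Hsol as (Hc & HA & HB & HR & HBR & E1 & E2 & E3e & E4e).
  set (q := pr 1%nat) in *.
  set (lam := INR k * c * q).
  assert (HkR : 0 < INR k) by (apply lt_0_INR; lia).
  assert (HS : forall s, compound_poisson (INR k * c) pr s = poisson lam s)
    by (intro s; rewrite compound_bern by exact HR; reflexivity).
  assert (E3f : forall v, pb v = sumR l (fun a => pa a * E3 l lam a v)).
  { intro v. rewrite E3e. apply sumR_ext. intros a _. f_equal.
    rewrite (Series_ext _ (fun s => poisson lam s *
      indZ (clampZ 0 (Z.of_nat l - 1) (Z.of_nat l - Z.of_nat a - Z.of_nat s)) (Z.of_nat v)))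
      by (intro; rewrite HS; reflexivity).
    apply Series3, Hl. }
  assert (E4f : forall v, pbr v = sumR l (fun a1 => sumR l (fun a2 => pa a1 * pa a2 * E4 l lam a1 a2 v))).
  { intro v. rewrite E4e. apply sumR_ext. intros a1 _. apply sumR_ext. intros a2 _. f_equal.
    rewrite (Series_ext _ (fun s => poisson lam s *
      indZ (clampZ 0 1 (Z.of_nat l - Z.of_nat a1 - Z.of_nat a2 - Z.of_nat s)) (Z.of_nat v)))
      by (intro; rewrite HS; reflexivity).
    apply Series4. }
  assert (Stat : forall w, (w < l)%nat -> pa w = sumR l (fun a => pa a * Kf l lam a w)).
  { intros w Hw. rewrite E1.
    rewrite (sumR_single l _ (l - 1 - w)) by (try lia; intros i Hi Hne; rewrite indZ_neq by lia; ring).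
    rewrite indZ_eq by lia. rewrite Rmult_1_r, E3f. reflexivity. }
  assert (Uniq : forall w, (w < l)%nat -> pa w = pa O * hh l lam w)
    by (apply stat_unique; intros; apply Stat; lia).
  destruct HA as (HAn & HAh & HAs).
  assert (Hsum : pa O * Zs l lam = 1).
  { rewrite <- HAs. unfold Zs. rewrite <- sumR_scal. symmetry. apply sumR_ext. intros; apply Uniq; auto. }
  destruct (pmf2_facts pr HR) as [Hr0 Hr2].
  assert (Hq0 : 0 <= q) by (destruct HR as (Hn & _); apply Hn).
  assert (Hlam0 : 0 <= lam) by (unfold lam; apply Rmult_le_pos; [apply Rmult_le_pos|]; lra).
  destruct (Rle_lt_or_eq_dec 0 lam Hlam0) as [Hlp|Hle].
  - exists lam. split; [exact Hlp|].
    pose proof (Zs_ge1 l lam Hl Hlp) as HZ.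
    assert (HpA : forall a, pa a = pi l lam a).
    { intro a. destruct (Nat.ltb_spec a l).
      + rewrite Uniq, pi_lt by auto. assert (pa O = / Zs l lam) by (field_simplify_eq; lra).
        rewrite H0. unfold Rdiv. ring.
      + rewrite pi_high, HAh by auto. reflexivity. }
    assert (FA : pa = pi l lam) by (apply functional_extensionality; exact HpA).
    subst pa.
    assert (FB : pb = bac l lam) by (apply functional_extensionality; exact E3f).
    assert (FBR : pbr = bar l lam) by (apply functional_extensionality; exact E4f).
    subst pb pbr.
    assert (FR : pr = arb k l lam) by (apply functional_extensionality; exact E2).
    assert (Hqq : qq k l lam = q) by (unfold qq, q; rewrite FR; reflexivity).
    unfold FF. rewrite <- FR. f_equal.
    unfold cc. rewrite Hqq. unfold lam. field.
    split; [|lra]. intro Hq. unfold lam in Hlp. rewrite Hq in Hlp. lra.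
  - exfalso. apply Hnt.
    assert (Hq : q = 0).
    { unfold lam in Hle. destruct (Rmult_integral (INR k * c) q (eq_sym Hle)) as [H|H]; [|exact H].
      exfalso. assert (0 < INR k * c) by (apply Rmult_lt_0_compat; lra). lra. }
    rewrite <- Hle in *.
    assert (HZ1 : Zs l 0 = 1).
    { unfold Zs. rewrite (sumR_single l _ O) by (try lia; intros i Hi Hne; apply hh_lam0; lia).
      apply hh_0. }
    assert (Hp0 : pa O = 1) by (rewrite HZ1 in Hsum; lra).
    assert (Hpa : forall a, (a < l)%nat -> a <> O -> pa a = 0).
    { intros a Ha Hne. rewrite Uniq, hh_lam0 by (auto; lia). ring. }
    unfold trivial_solution. cbn [pACB pBAC pARB pBAR].
    split; [exact Hp0|]. split; [rewrite Hr0; fold q; rewrite Hq; ring|]. split.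
    + rewrite E3f.
      rewrite (sumR_single l _ O) by (try lia; intros i Hi Hne; rewrite Hpa by auto; ring).
      rewrite Hp0. unfold E3. rewrite Tl0 by lia. rewrite poisson0_sum by lia.
      rewrite indZ_eq by (unfold clampZ; lia). ring.
    + rewrite E4f.
      rewrite (sumR_single l _ O).
      * rewrite (sumR_single l _ O) by (try lia; intros i Hi Hne; rewrite (Hpa i) by auto; ring).
        rewrite Hp0. unfold E4. rewrite Tl0 by lia. rewrite poisson0_sum by lia.
        rewrite indZ_eq by (unfold clampZ; lia). ring.
      * lia.
      * intros i Hi Hne. apply sumR_zero. intros. rewrite (Hpa i) by auto. ring.
Qed.


Lemma AnAt_Tl l x0 : AnAt (fun lam => Tl l lam) x0.
Proof.
  unfold Tl. apply AnAt_minus; [apply AnAt_const|]. apply AnAt_sumR. intros; apply AnAt_poisson.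
Qed.

Lemma AnAt_E3 l a v x0 : AnAt (fun lam => E3 l lam a v) x0.
Proof.
  unfold E3. apply AnAt_plus.
  - apply AnAt_sumR. intros. apply AnAt_mult; [apply AnAt_poisson|apply AnAt_const].
  - apply AnAt_mult; [apply AnAt_const|apply AnAt_Tl].
Qed.

Lemma AnAt_E4 l a1 a2 v x0 : AnAt (fun lam => E4 l lam a1 a2 v) x0.
Proof.
  unfold E4. apply AnAt_plus.
  - apply AnAt_sumR. intros. apply AnAt_mult; [apply AnAt_poisson|apply AnAt_const].
  - apply AnAt_mult; [apply AnAt_const|apply AnAt_Tl].
Qed.

Lemma AnAt_hh l x0 w : AnAt (fun lam => hh l lam w) x0.
Proof.
  assert (H : forall n w, (w <= n)%nat -> AnAt (fun lam => hh l lam w) x0).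
  { induction n as [|n IH]; intros w' Hw.
    - assert (w' = O) by lia. subst w'. apply (AnAt_constf _ 1). intro; apply hh_0.
    - destruct (Nat.leb_spec w' n); [apply IH; lia|].
      assert (w' = S n) by lia. subst w'.
      apply (AnAt_ext (fun lam => exp (1 * lam) * (hh l lam n - sumR (S n) (fun a => hh l lam a * Kf l lam a n)))).
      { intro lam. rewrite hh_S, Rmult_1_l. reflexivity. }
      apply AnAt_mult; [apply AnAt_exp|]. apply AnAt_minus; [apply IH; lia|].
      apply AnAt_sumR. intros i Hi. apply AnAt_mult; [apply IH; lia|apply AnAt_E3]. }
  apply (H w w). lia.
Qed.

Lemma AnAt_pi l x0 a : (2 <= l)%nat -> 0 < x0 -> AnAt (fun lam => pi l lam a) x0.
Proof.
  intros Hl Hx. unfold pi. destruct (Nat.ltb_spec a l).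
  - apply AnAt_div; [apply AnAt_hh| |].
    + unfold Zs. apply AnAt_sumR. intros; apply AnAt_hh.
    + pose proof (Zs_ge1 l x0 Hl Hx). lra.
  - apply AnAt_const.
Qed.

Lemma AnAt_bac l x0 v : (2 <= l)%nat -> 0 < x0 -> AnAt (fun lam => bac l lam v) x0.
Proof.
  intros Hl Hx. unfold bac. apply AnAt_sumR. intros. apply AnAt_mult; [apply AnAt_pi; auto|apply AnAt_E3].
Qed.

Lemma AnAt_bar l x0 v : (2 <= l)%nat -> 0 < x0 -> AnAt (fun lam => bar l lam v) x0.
Proof.
  intros Hl Hx. unfold bar. apply AnAt_sumR. intros. apply AnAt_sumR. intros.
  apply AnAt_mult; [apply AnAt_mult; apply AnAt_pi; auto|apply AnAt_E4].
Qed.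

Lemma AnAt_arb k l x0 v : (2 <= l)%nat -> 0 < x0 -> AnAt (fun lam => arb k l lam v) x0.
Proof.
  intros Hl Hx. unfold arb, arbf. apply AnAt_sumR. intros. apply AnAt_mult; [|apply AnAt_const].
  apply (AnAt_conv_pow (fun lam => bar l lam)). intro j. apply AnAt_bar; auto.
Qed.

Lemma AnAt_cc k l x0 : (2 <= k)%nat -> (2 <= l)%nat -> 0 < x0 -> AnAt (fun lam => cc k l lam) x0.
Proof.
  intros Hk Hl Hx. unfold cc. apply AnAt_div; [apply AnAt_id| |].
  - apply AnAt_mult; [apply AnAt_const|]. unfold qq. apply AnAt_arb; auto.
  - pose proof (qq_pos k l x0 Hk Hl Hx). assert (0 < INR k) by (apply lt_0_INR; lia).
    assert (0 < INR k * qq k l x0) by (apply Rmult_lt_0_compat; lra). lra.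
Qed.

Theorem lemma7 (k l : nat) (hk : (2 <= k)%nat) (hl : (2 <= l)%nat) :
  exists F : R -> Dist4 * R,
    (forall lam, 0 < lam ->
       relaxed_solution k l (fst (F lam)) (snd (F lam)) /\
       ~ trivial_solution l (fst (F lam))) /\
    (forall lam1 lam2, 0 < lam1 -> 0 < lam2 -> F lam1 = F lam2 -> lam1 = lam2) /\
    (forall (rho : Dist4) (c : R),
       relaxed_solution k l rho c -> ~ trivial_solution l rho ->
       exists lam, 0 < lam /\ F lam = (rho, c)) /\
    analytic_on_pos (fun lam => snd (F lam)) /\
    (forall i : nat,
       analytic_on_pos (fun lam => pACB (fst (F lam)) i) /\
       analytic_on_pos (fun lam => pBAC (fst (F lam)) i) /\
       analytic_on_pos (fun lam => pARB (fst (F lam)) i) /\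
       analytic_on_pos (fun lam => pBAR (fst (F lam)) i)).
Proof.
  exists (FF k l). split; [|split; [|split; [|split]]].
  - intros lam Hlam. split; [apply FF_sol; auto|].
    intros (_ & H2 & _ & _). cbn [FF fst pARB] in H2.
    assert (Hpa : is_pmf 2 (arb k l lam)) by (apply arbf_pmf; [lia|apply bar_pmf; auto]).
    destruct (pmf2_facts _ Hpa) as [H0 _].
    pose proof (qq_pos k l lam hk hl Hlam). unfold qq in H. lra.
  - intros l1 l2 H1 H2 E.
    rewrite <- (lam_recover k l l1), <- (lam_recover k l l2) by auto.
    assert (Ec : cc k l l1 = cc k l l2) by exact (f_equal snd E).
    assert (Eq : qq k l l1 = qq k l l2) by exact (f_equal (fun p => pARB (fst p) 1%nat) E).
    rewrite Ec, Eq. reflexivity.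
  - intros rho c Hs Hnt. apply FF_surj; auto.
  - apply AnAt_analytic. intros x0 Hx. cbn [FF snd]. apply AnAt_cc; auto.
  - intro i. split; [|split; [|split]]; apply AnAt_analytic; intros x0 Hx; cbn [FF fst pACB pBAC pARB pBAR].
    + apply AnAt_pi; auto.
    + apply AnAt_bac; auto.
    + apply AnAt_arb; auto.
    + apply AnAt_bar; auto.
Qed.
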